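(* Let $\{\mathcal Z_n\}$ be a Galton–Watson process with countably many types and irreducible mean progeny matrix $M$ satisfying the dichotomy property. Suppose there exist a probability vector $\boldsymbol\alpha_1$ with all entries strictly positive and $\lambda_1<1$ such that $\boldsymbol\alpha_1M\le\lambda_1\boldsymbol\alpha_1$, and a probability vector $\boldsymbol\alpha_2$ and $\lambda_2>1$ such that $\boldsymbol\alpha_2M\ge\lambda_2\boldsymbol\alpha_2$. Then $\boldsymbol q=\boldsymbol 1$; if $\varphi_0$ has distribution $\boldsymbol\alpha_1$ then $\mathbb E[|\mathcal Z_n|]\le\lambda_1^n$ for all $n$, so $\mathbb E[|\mathcal Z_n|]\to0$; and if $\varphi_0$ has distribution $\boldsymbol\alpha_2$ then $\mathbb E[|\mathcal Z_n|]\to\infty$ while the population still becomes extinct with probability 1.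
   Context: A (multitype) Galton–Watson process with type set $\mathcal S=\{1,2,3,\dots\}$ is $\{\mathcal Z_n=(Z_{n1},Z_{n2},\dots)\}_{n\in\mathbb N}$, $Z_{n\ell}$ the number of type-$\ell$ individuals in generation $n$, started from one individual of (possibly random) type $\varphi_0$; $|\mathcal Z_n|=\sum_\ell Z_{n\ell}$. The mean progeny matrix is $M_{ij}=\partial P_i/\partial s_j|_{\boldsymbol s=\boldsymbol 1}$ (assumed finite). Global extinction: $q_i=\mathbb P[\lim_n|\mathcal Z_n|=0\mid\varphi_0=i]$. The dichotomy property holds if for every initial type $i$, with probability 1 either $|\mathcal Z_n|=0$ eventually or $|\mathcal Z_n|\to\infty$. Vector inequalities are componentwise. *)

(* Defs.v *)
From HB Require Import structures.
From mathcomp Require Import all_boot all_order all_algebra.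
From mathcomp Require Import all_classical all_reals all_analysis.
Set Implicit Arguments. Unset Strict Implicit. Unset Printing Implicit Defensive.
Import Order.TTheory GRing.Theory Num.Theory.
Local Open Scope classical_set_scope.
Local Open Scope ring_scope.

(* Types are indexed by nat (type 0 plays the role of the paper's type 1).
   A generation is a count vector  z : nat -> nat  (z l = number of type-l
   individuals). *)
Definition pop := nat -> nat.

Definition finpop (z : pop) : Prop := exists N, forall l, (N <= l)%N -> z l = 0%N.

Definition zeropop : pop := fun _ => 0%N.

Definition unitpop (i : nat) : pop := fun l => (l == i : nat).

Section GW.
Variable R : realType.

Definition popsize (z : pop) : \bar R := \esum_(l in setT) ((z l)%:R)%:E.

(* p i v = probability that an individual of type i has offspring vector v *)
Definition offspring_law (p : nat -> pop -> R) : Prop :=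
  forall i, (forall v, 0 <= p i v) /\ (forall v, ~ finpop v -> p i v = 0) /\
            \esum_(v in setT) (p i v)%:E = 1%E.

Fixpoint offs_conv (p : nat -> pop -> R) (xs : seq nat) (w : pop) : \bar R :=
  match xs with
  | [::] => (\1_[set zeropop] w)%:E
  | x :: xs' => \esum_(v in [set v : pop | forall l, (v l <= w l)%N])
                  ((p x v)%:E * offs_conv p xs' (fun l => (w l - v l)%N))%E
  end.

(* list of the individuals (by type) of z, assuming z is supported in [0,N) *)
Definition indiv (N : nat) (z : pop) : seq nat :=
  flatten [seq nseq (z l) l | l <- iota 0 N].

Definition hist (T : Type) (Z : nat -> T -> pop) (n : nat) (zs : nat -> pop) : set T :=
  [set w | forall k, (k <= n)%N -> Z k w = zs k].

Definition GW_process (d : measure_display) (T : measurableType d)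
  (P : probability T R) (Z : nat -> T -> pop) (p : nat -> pop -> R)
  (alpha : nat -> R) : Prop :=
  [/\ (forall n l k, measurable [set w | Z n w l = k]),
      (forall n w, finpop (Z n w)),
      (forall i, P [set w | Z 0%N w = unitpop i] = (alpha i)%:E) &
      (forall n (zs : nat -> pop) N, (forall l, (N <= l)%N -> zs n l = 0%N) ->
         P (hist Z n.+1 zs) = (P (hist Z n zs) * offs_conv p (indiv N (zs n)) (zs n.+1))%E)].

Definition mean_matrix (p : nat -> pop -> R) (i j : nat) : \bar R :=
  \esum_(v in setT) (p i v * (v j)%:R)%:E.

Fixpoint mxpow (M : nat -> nat -> \bar R) (n : nat) (i j : nat) : \bar R :=
  match n with
  | 0%N => ((i == j)%:R)%:E
  | n'.+1 => \esum_(k in setT) (mxpow M n' i k * M k j)%E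
  end.

Definition irreducible (M : nat -> nat -> \bar R) : Prop :=
  forall i j, exists n, (0 < mxpow M n i j)%E.

Definition vecmat (a : nat -> R) (M : nat -> nat -> \bar R) (j : nat) : \bar R :=
  \esum_(i in setT) ((a i)%:E * M i j)%E.

Definition prob_vector (a : nat -> R) : Prop :=
  (forall i, 0 <= a i) /\ \esum_(i in setT) (a i)%:E = 1%E.

Definition delta (i : nat) : nat -> R := fun j => (j == i)%:R.

Definition extinct (T : Type) (Z : nat -> T -> pop) : set T :=
  [set w | exists n, forall m, (n <= m)%N -> Z m w = zeropop].

Definition explodes (T : Type) (Z : nat -> T -> pop) : set T :=
  [set w | forall K : R, exists n, forall m, (n <= m)%N -> (K%:E < popsize (Z m w))%E].

End GW.

(* Main.v *)
Require Import Defs.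
From HB Require Import structures.
From mathcomp Require Import all_boot all_order all_algebra.
From mathcomp Require Import all_classical all_reals all_analysis.
From mathcomp Require Import zify ring lra.
Import Order.TTheory GRing.Theory Num.Theory.
Local Open Scope classical_set_scope.
Local Open Scope ring_scope.

Module Helpers.
Set Implicit Arguments. Unset Strict Implicit. Unset Printing Implicit Defensive.
Definition isbnd (z : pop) (N : nat) : bool := `[< forall l, (N <= l)%N -> z l = 0%N >].

Lemma finpop_ex {z : pop} : finpop z -> exists N, isbnd z N.
Proof. by move=> [N HN]; exists N; apply/asboolP. Qed.

Definition bnd (z : pop) : nat :=
  match pselect (finpop z) with
  | left H => ex_minn (finpop_ex H)
  | right _ => 0%N end.

Lemma bndP (z : pop) : finpop z ->
  isbnd z (bnd z) /\ forall M, isbnd z M -> (bnd z <= M)%N.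
Proof.
move=> fz; rewrite /bnd; case: pselect => // H.
by case: ex_minnP => m Hm Hmin; split.
Qed.

Definition popseq (z : pop) : seq nat := mkseq z (bnd z).
Definition seqpop (t : seq nat) : pop := fun l => nth 0%N t l.
Definition canon (t : seq nat) : bool := last 1%N t != 0%N.

Lemma seqpopK (z : pop) : finpop z -> seqpop (popseq z) = z.
Proof.
move=> fz; have [/asboolP hb _] := bndP fz.
apply: funext => l; rewrite /seqpop /popseq.
case: (ltnP l (bnd z)) => hl; first by rewrite nth_mkseq.
by rewrite nth_default ?size_mkseq // hb.
Qed.

Lemma canon_popseq (z : pop) : finpop z -> canon (popseq z).
Proof.
move=> fz; have [/asboolP hb hmin] := bndP fz.
rewrite /canon /popseq; case E: (bnd z) => [|N] //. idtac.
rewrite /mkseq -[N.+1]addn1 iotaD map_cat last_cat /= add0n.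
apply/eqP => zN.
have : isbnd z N.
  apply/asboolP => l; rewrite leq_eqVlt => /orP[/eqP<-//|]; rewrite -E; exact: hb.
by move/hmin; rewrite E ltnn.
Qed.

Lemma finpop_seqpop (t : seq nat) : finpop (seqpop t).
Proof. by exists (size t) => l hl; rewrite /seqpop nth_default. Qed.

Lemma popseqK (t : seq nat) : canon t -> popseq (seqpop t) = t.
Proof.
move=> ct; have [/asboolP hb hmin] := bndP (finpop_seqpop t).
have hs : bnd (seqpop t) = size t.
  apply/eqP; rewrite eqn_leq; apply/andP; split.
    by apply: hmin; apply/asboolP => l hl; rewrite /seqpop nth_default.
  case: t ct hb {hmin} => [//|x t] ct hb.
  rewrite /= ltnNge; apply/negP => hl.
  move: ct; rewrite /canon /= (last_nth 0%N).
  by have := hb (size t) hl; rewrite /seqpop => ->.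
apply: (@eq_from_nth _ 0%N); first by rewrite size_mkseq hs.
by move=> i; rewrite size_mkseq hs => hi; rewrite nth_mkseq ?hs.
Qed.

Lemma popseq_inj (z1 z2 : pop) : finpop z1 -> finpop z2 ->
  popseq z1 = popseq z2 -> z1 = z2.
Proof. by move=> f1 f2 e; rewrite -(seqpopK f1) -(seqpopK f2) e. Qed.
Local Open Scope ereal_scope.

Section esumh.
Variable R : realType.

Lemma esumZl (T : choiceType) (I : set T) (a : T -> \bar R) (r : R) :
  (0 <= r)%R -> (forall i, I i -> 0 <= a i) ->
  \esum_(i in I) (r%:E * a i) = r%:E * \esum_(i in I) a i.
Proof.
move=> r0 a0; rewrite /esum -ereal_supZl //; last first.
  by apply/set0P; exists (\sum_(x \in set0) a x); exists set0 => //; exact: fsets_set0.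
congr ereal_sup; apply/seteqP; split => x /=.
- move=> [A [finA AI] <-]; exists (\sum_(x \in A) a x); first by exists A.
  pose F i := if i \in I then a i else 0.
  have F0 i : 0 <= F i by rewrite /F; case: ifPn => // /set_mem /a0.
  have eA : \sum_(x \in A) a x = \sum_(x \in A) F x.
    by apply: eq_fsbigr => i /set_mem /AI Ii; rewrite /F mem_set.
  rewrite eA ge0_mule_fsumr //; apply: eq_fsbigr => i /set_mem /AI Ii.
  by rewrite /F mem_set.
- move=> [y [A [finA AI] <-] <-]; exists A => //.
  pose F i := if i \in I then a i else 0.
  have F0 i : 0 <= F i by rewrite /F; case: ifPn => // /set_mem /a0.
  have eA : \sum_(x \in A) a x = \sum_(x \in A) F x.
    by apply: eq_fsbigr => i /set_mem /AI Ii; rewrite /F mem_set.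
  rewrite eA ge0_mule_fsumr //; apply: eq_fsbigr => i /set_mem /AI Ii.
  by rewrite /F mem_set.
Qed.

Lemma esumZr (T : choiceType) (I : set T) (a : T -> \bar R) (r : R) :
  (0 <= r)%R -> (forall i, I i -> 0 <= a i) ->
  \esum_(i in I) (a i * r%:E) = (\esum_(i in I) a i) * r%:E.
Proof.
by move=> r0 a0; rewrite [RHS]muleC -esumZl //; apply: eq_esum => i _; rewrite muleC.
Qed.

Lemma esum_sub (T : choiceType) (A B : set T) (a : T -> \bar R) :
  B `<=` A -> (forall i, A i -> 0 <= a i) -> (forall i, A i -> ~ B i -> a i = 0) ->
  \esum_(i in A) a i = \esum_(i in B) a i.
Proof.
move=> BA a0 aB; rewrite (esumID B) //.
rewrite [X in _ + X]esum1 ?adde0; last by move=> i [Ai nBi]; exact: aB.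
by congr esum; apply/seteqP; split => [i [] //|i Bi]; split => //; exact: BA.
Qed.

Lemma esum_pair (T1 T2 : choiceType) (a : T1 -> T2 -> \bar R) :
  (forall i j, 0 <= a i j) ->
  \esum_(i in setT) \esum_(j in setT) a i j = \esum_(k in setT) a k.1 k.2.
Proof.
move=> a0; rewrite esum_esum //; congr esum; apply/seteqP; split => //.
Qed.

Lemma esum_swap (T1 T2 : choiceType) (a : T1 -> T2 -> \bar R) :
  (forall i j, 0 <= a i j) ->
  \esum_(i in setT) \esum_(j in setT) a i j =
  \esum_(j in setT) \esum_(i in setT) a i j.
Proof.
move=> a0; rewrite !esum_pair //.
rewrite (reindex_esum setT setT (fun k : T2 * T1 => (k.2, k.1))) //.
split => //; first by move=> [? ?] [? ?] _ _ [-> ->].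
by move=> [i j] _; exists (j, i).
Qed.

Lemma esum_set1' (T : choiceType) (t : T) (a : T -> \bar R) :
  (forall i, 0 <= a i) -> (forall i, i <> t -> a i = 0) ->
  \esum_(i in setT) a i = a t.
Proof.
move=> a0 at0; rewrite (esum_sub (B := [set t])) //; first exact: esum_set1.
by move=> i _ /= it; exact: at0.
Qed.

End esumh.

Local Open Scope ereal_scope.

Definition vplus (v u : pop) : pop := fun l => (v l + u l)%N.

Section conv.
Variable R : realType.
Variable p : nat -> pop -> R.
Hypothesis hp : offspring_law p.
Hypothesis hM : forall i j, mean_matrix p i j \is a fin_num.

Lemma p_ge0 x v : (0 <= p x v)%R.
Proof. by case: (hp x) => h _; exact: h. Qed.

Lemma p_mass x : \esum_(v in setT) (p x v)%:E = 1.
Proof. by case: (hp x) => _ []. Qed.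

Lemma conv_ge0 xs w : 0 <= offs_conv p xs w.
Proof.
elim: xs w => [|x xs IH] w /=; first by rewrite lee_fin indicE.
by apply: esum_ge0 => v _; rewrite mule_ge0 // lee_fin p_ge0.
Qed.

Lemma conv_step x xs (h : pop -> R) : (forall w, 0 <= h w)%R ->
  \esum_(w in setT) (offs_conv p (x :: xs) w * (h w)%:E) =
  \esum_(v in setT) \esum_(u in setT)
     ((p x v)%:E * offs_conv p xs u * (h (vplus v u))%:E).
Proof.
move=> h0 /=.
transitivity (\esum_(w in setT) \esum_(v in [set v : pop | forall l, (v l <= w l)%N])
   ((p x v)%:E * offs_conv p xs (fun l => (w l - v l)%N) * (h w)%:E)).
  apply: eq_esum => w _; rewrite -esumZr //.
  by move=> v _; rewrite mule_ge0 ?conv_ge0 // lee_fin p_ge0.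
rewrite esum_esum; last first.
  by move=> w v _ _; rewrite !mule_ge0 ?conv_ge0 // lee_fin ?p_ge0.
rewrite esum_pair; last first.
  by move=> v u; rewrite !mule_ge0 ?conv_ge0 // lee_fin ?p_ge0.
rewrite (reindex_esum setT _ (fun k : pop * pop => (vplus k.1 k.2, k.1))) /=.
  apply: eq_esum => -[v u] _ /=; congr (_ * offs_conv p xs _ * _).
  by apply: funext => l; rewrite /vplus addKn.
split.
- by move=> [v u] _ /=; split => // l; rewrite /vplus leq_addr.
- move=> [v1 u1] [v2 u2] _ _ /= [e1 e2]; subst v2; congr pair.
  apply: funext => l; have := congr1 (fun f => f l) e1.
  by rewrite /vplus => /addnI.
- move=> [w v] [_ /= vw]; exists (v, fun l => (w l - v l)%N) => //=.
  congr pair; apply: funext => l; rewrite /vplus subnKC //.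
Qed.

Lemma conv_mass xs : \esum_(w in setT) offs_conv p xs w = 1.
Proof.
elim: xs => [|x xs IH].
  rewrite (esum_set1' (t := zeropop)) /=; first by rewrite indicE mem_set.
    by move=> w; rewrite lee_fin indicE.
  by move=> w wz; rewrite indicE memNset.
transitivity (\esum_(w in setT) (offs_conv p (x :: xs) w * (1%R)%:E)).
  by apply: eq_esum => w _; rewrite mule1.
rewrite conv_step //.
transitivity (\esum_(v in setT) ((p x v)%:E * \esum_(u in setT) offs_conv p xs u)).
  apply: eq_esum => v _; rewrite -esumZl ?p_ge0 //; last by move=> *; exact: conv_ge0.
  by apply: eq_esum => u _; rewrite mule1.
by rewrite IH; under eq_esum do rewrite mule1; exact: p_mass.
Qed.

Lemma conv_mean xs j : \esum_(w in setT) (offs_conv p xs w * ((w j)%:R)%:E) =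
  \sum_(x <- xs) mean_matrix p x j.
Proof.
elim: xs => [|x xs IH].
  rewrite big_nil esum1 // => w _ /=; rewrite indicE.
  by case: (boolP (w \in _)) => [/set_mem -> | _]; rewrite ?mul0e // mul1e.
rewrite conv_step; last by move=> w; exact: ler0n.
rewrite big_cons.
transitivity (\esum_(v in setT) (((p x v) * (v j)%:R)%:E * (\esum_(u in setT) offs_conv p xs u)
   + (p x v)%:E * (\esum_(u in setT) (offs_conv p xs u * ((u j)%:R)%:E)))).
  apply: eq_esum => v _.
  rewrite -[X in X + _]esumZl ?mulr_ge0 ?p_ge0 //; last by move=> *; exact: conv_ge0.
  rewrite -[X in _ + X]esumZl ?p_ge0 //; last by move=> *; rewrite mule_ge0 ?conv_ge0 ?lee_fin.
  rewrite -esumD; last 2 first.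
  - by move=> *; rewrite mule_ge0 ?conv_ge0 // lee_fin mulr_ge0 ?p_ge0.
  - by move=> *; rewrite !mule_ge0 ?conv_ge0 // lee_fin ?p_ge0.
  apply: eq_esum => u _; rewrite /vplus natrD EFinD ge0_muleDr ?lee_fin //.
  by rewrite EFinM muleA; congr (_ + _); rewrite -!muleA [X in _ * X]muleC.
rewrite esumD; last 2 first.
- by move=> *; rewrite mule_ge0 ?esum_ge0 // ?lee_fin ?mulr_ge0 ?p_ge0 // => *; exact: conv_ge0.
- by move=> *; rewrite mule_ge0 ?esum_ge0 // ?lee_fin ?p_ge0 // => *; rewrite mule_ge0 ?conv_ge0.
rewrite conv_mass IH; congr (_ + _).
  by under eq_esum do rewrite mule1.
have fS : \sum_(x <- xs) mean_matrix p x j \is a fin_num.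
  by apply/sum_fin_numP => *; exact: hM.
rewrite -(fineK fS) esumZr; last 2 first.
- by rewrite -lee_fin fineK // sume_ge0 // => *; apply: esum_ge0 => *; rewrite lee_fin mulr_ge0 ?p_ge0.
- by move=> *; rewrite lee_fin p_ge0.
by rewrite p_mass mul1e.
Qed.
End conv.

Local Open Scope ereal_scope.

Section cntmeas.
Context d (T : measurableType d) (R : realType) (mu : {measure set T -> \bar R}).
Context (I : countType) (E : I -> set T).
Hypothesis mE : forall i, measurable (E i).
Hypothesis dE : forall i j, i <> j -> E i `&` E j = set0.

Lemma unpK {J : countType} {m} {i : J} : pickle_inv m = Some i -> pickle i = m.
Proof. by move=> e; have := @pickle_invK J m; rewrite e. Qed.

Definition Enat (m : nat) : set T :=
  match pickle_inv m with Some i => E i | None => set0 end.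

Lemma EnatK i : Enat (pickle i) = E i.
Proof. by rewrite /Enat pickleK_inv. Qed.

Lemma mEnat m : measurable (Enat m).
Proof. by rewrite /Enat; case: pickle_inv. Qed.

Lemma Enat_some m x : Enat m x -> exists i, pickle_inv m = Some i /\ E i x.
Proof. by rewrite /Enat; case: pickle_inv => // i ?; exists i. Qed.

Lemma trivEnat (K : set nat) : trivIset K Enat.
Proof.
move=> m1 m2 _ _ [x [/Enat_some [i1 [e1 x1]] /Enat_some [i2 [e2 x2]]]].
have e : i1 = i2.
  apply: contrapT => ne; have := dE ne; rewrite -subset0 => /(_ x); apply; by split.
by rewrite -(unpK e1) -(unpK e2) e.
Qed.

Lemma cnt_add (S : set I) :
  mu (\bigcup_(i in S) E i) = \esum_(i in S) mu (E i).
Proof.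
have -> : \bigcup_(i in S) E i = \bigcup_(m in pickle @` S) Enat m.
  apply/seteqP; split => x.
    by move=> [i Si Eix]; exists (pickle i); [exists i|rewrite EnatK].
  by move=> [_ [i Si <-]]; rewrite EnatK => ?; exists i.
rewrite measure_bigcup; [|by move=> *; exact: mEnat|exact: trivEnat].
rewrite nneseries_esum //.
rewrite (_ : [set x | x \in [set pickle x | x in S]] = pickle @` S); last first.
  by apply/seteqP; split => x /=; rewrite inE.
rewrite (esum_image _ _ (fun m => mu (Enat m))) /=; last by move=> ? ? _ _ /(pcan_inj pickleK_inv).
by apply: eq_esum => i _; rewrite EnatK.
Qed.

Hypothesis cE : \bigcup_(i in setT) E i = setT.

Lemma cnt_int (f : T -> \bar R) (c : I -> \bar R) :
  (forall i x, E i x -> f x = c i) -> (forall i, 0 <= c i) ->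
  \int[mu]_x f x = \esum_(i in setT) (c i * mu (E i)).
Proof.
move=> fc c0.
have cov : \bigcup_k Enat k = setT.
  apply/seteqP; split => // x _; move: (cE); rewrite -subTset => /(_ x Logic.I) [i _ Eix].
  by exists (pickle i) => //; rewrite EnatK.
pose c' m := match pickle_inv m with Some i => c i | None => 0 end.
have fc' m x : Enat m x -> f x = c' m.
  by rewrite /Enat /c'; case: pickle_inv => // i; exact: fc.
have f0 x : 0 <= f x.
  move: (cE); rewrite -subTset => /(_ x Logic.I) [i _ Eix]; rewrite (fc i) //.
rewrite -cov ge0_integral_bigcup //; last 3 first.
- exact: mEnat.
- move=> _ Y mY; rewrite cov setTI.
  have -> : f @^-1` Y = \bigcup_(m in [set m | Y (c' m)]) Enat m.
    apply/seteqP; split => x /=.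
      move=> Yfx; have : (\bigcup_k Enat k) x by rewrite cov.
      by move=> [m _ Emx]; exists m => //=; rewrite -(fc' m x).
    by move=> [m /= Ym Emx]; rewrite (fc' m x).
  by apply: bigcup_measurable => *; exact: mEnat.
- by apply: trivEnat.
transitivity (\sum_(m <oo) (c' m * mu (Enat m))).
  apply: eq_eseriesr => m _.
  rewrite -(integral_cst _ (mEnat m)); apply: eq_integral => x /set_mem Ex.
  by rewrite (fc' m x).
have c'0 m : 0 <= c' m by rewrite /c'; case: pickle_inv.
rewrite nneseries_esumT; last by move=> m; rewrite mule_ge0.
rewrite (@esum_sub R nat setT [set pickle i | i in (setT : set I)]) //; last 2 first.
- by move=> m _; rewrite mule_ge0.
- move=> m _ nm; rewrite /c' /Enat; case E1 : pickle_inv => [i|]; last by rewrite mul0e.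
  by exfalso; apply: nm; exists i => //; rewrite (unpK E1).
rewrite esum_image; last by move=> ? ? _ _ /(pcan_inj pickleK_inv).
by apply: eq_esum => i _; rewrite EnatK /c' pickleK_inv.
Qed.

End cntmeas.

Local Open Scope ereal_scope.

Definition tr (T : Type) (Z : nat -> T -> pop) n w : seq (seq nat) :=
  [seq popseq (Z k w) | k <- iota 0 n.+1].
Definition cell (T : Type) (Z : nat -> T -> pop) n s : set T := [set w | tr Z n w = s].
Definition valid n (s : seq (seq nat)) : bool := (size s == n.+1) && all canon s.
Definition zsOf (s : seq (seq nat)) : nat -> pop := fun k => seqpop (nth [::] s k).

Lemma canon_nth s k : all canon s -> canon (nth [::] s k).
Proof.
move=> /allP h; case: (ltnP k (size s)) => hk; first by apply: h; rewrite mem_nth.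
by rewrite nth_default.
Qed.

Section cells.
Context (R : realType) d (T : measurableType d) (Z : nat -> T -> pop).
Hypothesis mZ : forall n l k, measurable [set w | Z n w l = k].
Hypothesis fZ : forall n w, finpop (Z n w).

Lemma tr_valid n w : valid n (tr Z n w).
Proof.
rewrite /valid /tr size_map size_iota eqxx andTb; apply/allP => t /mapP [k _ ->].
exact: canon_popseq.
Qed.

Lemma nth_tr n w k : (k <= n)%N -> nth [::] (tr Z n w) k = popseq (Z k w).
Proof. by move=> kn; rewrite /tr (nth_map 0%N) ?size_iota ?ltnS // nth_iota. Qed.

Lemma cell_hist n s : valid n s -> cell Z n s = hist Z n (zsOf s).
Proof.
move=> /andP [/eqP ss cs]; apply/seteqP; split => w /=.
  move=> <- k kn; rewrite /zsOf nth_tr // seqpopK //.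
move=> h; apply: (@eq_from_nth _ [::]); first by rewrite /tr size_map size_iota ss.
move=> k; rewrite /tr size_map size_iota ltnS => kn; rewrite -/(tr Z n w) nth_tr //.
by rewrite h // /zsOf popseqK // canon_nth.
Qed.

Lemma cell_invalid n s : ~~ valid n s -> cell Z n s = set0.
Proof.
move=> nv; apply/seteqP; split => w //= e; move: nv; by rewrite -e tr_valid.
Qed.

Lemma mhist n zs : measurable (hist Z n zs).
Proof.
have -> : hist Z n zs = \bigcap_k \bigcap_l [set w | (k <= n)%N -> Z k w l = zs k l].
  apply/seteqP; split => w /=.
    by move=> h k _ l _ kn; rewrite h.
  move=> h k kn; apply: funext => l; exact: (h k Logic.I l Logic.I kn).
apply: bigcapT_measurable => k; apply: bigcapT_measurable => l.
case: (leqP k n) => kn.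
  by rewrite (_ : [set w | _] = [set w | Z k w l = zs k l]) //; apply/seteqP; split => w /=; auto.
by rewrite (_ : [set w | _] = setT) //; apply/seteqP; split => w //= _; rewrite leqNgt kn.
Qed.

Lemma mcell n s : measurable (cell Z n s).
Proof.
case: (boolP (valid n s)) => v; first by rewrite cell_hist //; exact: mhist.
by rewrite cell_invalid.
Qed.

Lemma cell_disj n s1 s2 : s1 <> s2 -> cell Z n s1 `&` cell Z n s2 = set0.
Proof. by move=> ne; apply/seteqP; split => w // [/= e1 e2]; apply: ne; rewrite -e1 -e2. Qed.

Lemma cell_cov n : \bigcup_(s in setT) cell Z n s = setT.
Proof. by apply/seteqP; split => w // _; exists (tr Z n w). Qed.

Lemma tr_S n w : tr Z n.+1 w = rcons (tr Z n w) (popseq (Z n.+1 w)).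
Proof. by rewrite /tr -[n.+2]addn1 iotaD map_cat add0n /= cats1. Qed.

Lemma hist_ext n zs1 zs2 : (forall k, (k <= n)%N -> zs1 k = zs2 k) -> hist Z n zs1 = hist Z n zs2.
Proof.
move=> h; apply/seteqP; split => w /= hw k kn; first by rewrite -h // hw.
by rewrite h // hw.
Qed.

End cells.

Local Open Scope ereal_scope.

Section conv2.
Variable R : realType.
Variable p : nat -> pop -> R.
Hypothesis hp : offspring_law p.

Lemma finpop_sub (w v : pop) : finpop w -> finpop v -> (forall l, v l <= w l)%N ->
  finpop (fun l => w l - v l)%N.
Proof. by move=> [N hN] _ _; exists N => l hl; rewrite hN. Qed.

Lemma conv_fin xs w : ~ finpop w -> offs_conv p xs w = 0.
Proof.
elim: xs w => [|x xs IH] w nw /=.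
  rewrite indicE memNset //= => wz; apply: nw; rewrite wz; by exists 0%N.
apply: esum1 => v /= vw.
case: (pselect (finpop v)) => fv.
  rewrite IH ?mule0 // => [[N hN]]; apply: nw; case: fv => N' hN'.
  exists (maxn N N') => l; rewrite geq_max => /andP [h1 h2].
  have := hN l h1; have := hN' l h2; have := vw l; lia.
case: (hp x) => _ [h0 _]; by rewrite h0 // mul0e.
Qed.

Lemma esum_le_term (T : choiceType) (a : T -> \bar R) t :
  (forall i, 0 <= a i) -> a t <= \esum_(i in setT) a i.
Proof.
move=> a0; apply: esum_ge; exists [set t]; first by split => //; exact: finite_set1.
by rewrite fsbig_set1.
Qed.

Lemma conv_le1 xs w : offs_conv p xs w <= 1.
Proof.
by rewrite -(conv_mass hp xs); apply: esum_le_term => i; exact: conv_ge0.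
Qed.

Lemma conv_fin_num xs w : offs_conv p xs w \is a fin_num.
Proof.
by rewrite ge0_fin_numE ?conv_ge0 // (le_lt_trans (conv_le1 xs w)) // ltry.
Qed.

End conv2.

Lemma esum_canon (R : realType) (g : pop -> \bar R) :
  (forall w, 0 <= g w) -> (forall w, ~ finpop w -> g w = 0) ->
  \esum_(t in [set t | canon t]) g (seqpop t) = \esum_(w in setT) g w.
Proof.
move=> g0 gf.
rewrite (@esum_sub _ _ setT finpop) //; last by move=> w _; exact: gf.
rewrite (reindex_esum [set t | canon t] finpop seqpop) //; split.
- by move=> t _; exact: finpop_seqpop.
- by move=> t1 t2 /set_mem c1 /set_mem c2 e; rewrite -(popseqK c1) -(popseqK c2) e.
- by move=> w fw; exists (popseq w); [exact: canon_popseq|exact: seqpopK].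
Qed.

Lemma indiv_mean (R : realType) (M : nat -> nat -> \bar R) (t : seq nat) j :
  (forall i j, 0 <= M i j) ->
  \sum_(x <- indiv (size t) (seqpop t)) M x j =
  \esum_(k in setT) (((seqpop t k)%:R)%:E * M k j).
Proof.
move=> M0; rewrite /indiv big_flatten big_map.
under eq_bigr do rewrite big_nseq iter_addr_0.
rewrite -nneseries_esumT; last by move=> k; rewrite mule_ge0.
under eq_eseriesr do rewrite mule_natl.
rewrite (nneseries_split 0 (size t)); last by move=> k _; rewrite -mule_natl mule_ge0.
rewrite add0n [X in _ + X]eseries0 ?adde0; last first.
  by move=> i hi _; rewrite /seqpop nth_default.
by rewrite /index_iota subn0.

Qed.

Local Open Scope ereal_scope.

Lemma mul4 (R : realType) (a b c e : \bar R) : a * b * c * e = (a * c) * (b * e).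
Proof. by rewrite -!muleA; congr (_ * _); rewrite muleCA. Qed.

Section GWsec.
Context (R : realType) (p : nat -> pop -> R).
Hypothesis hp : offspring_law p.
Hypothesis hM : forall i j, mean_matrix p i j \is a fin_num.
Context d (T : measurableType d) (P : probability T R) (Z : nat -> T -> pop).
Hypothesis mZ : forall n l k, measurable [set w | Z n w l = k].
Hypothesis fZ : forall n w, finpop (Z n w).
Hypothesis stZ : forall n (zs : nat -> pop) N, (forall l, (N <= l)%N -> zs n l = 0%N) ->
         P (hist Z n.+1 zs) = (P (hist Z n zs) * offs_conv p (indiv N (zs n)) (zs n.+1))%E.

Lemma Mx_ge0 i j : 0 <= mean_matrix p i j.
Proof. by apply: esum_ge0 => v _; rewrite lee_fin mulr_ge0 ?p_ge0. Qed.

Definition pc n s := fine (P (cell Z n s)).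

Lemma Pcell n s : P (cell Z n s) = (pc n s)%:E.
Proof. by rewrite fineK // fin_num_measure //; exact: (mcell mZ fZ). Qed.

Lemma pc_ge0 n s : (0 <= pc n s)%R.
Proof. by rewrite /pc fine_ge0 // measure_ge0. Qed.

Lemma pc_invalid n s : ~~ valid n s -> pc n s = 0%R.
Proof. by move=> nv; rewrite /pc cell_invalid // measure0. Qed.

Lemma cell_step n s t : valid n s -> canon t ->
  P (cell Z n.+1 (rcons s t)) = P (cell Z n s) *
    offs_conv p (indiv (size (nth [::] s n)) (seqpop (nth [::] s n))) (seqpop t).
Proof.
move=> vs ct; have /andP [/eqP ss cs] := vs.
have vst : valid n.+1 (rcons s t) by rewrite /valid size_rcons ss eqxx all_rcons ct cs.
rewrite (cell_hist fZ vst) (cell_hist fZ vs) (stZ (N := size (nth [::] s n))); last first.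
  by move=> l hl; rewrite /zsOf nth_rcons ss ltnSn /seqpop nth_default.
rewrite /zsOf nth_rcons ss ltnSn nth_rcons ss ltnn eqxx; congr (P _ * _).
by apply: hist_ext => k kn; rewrite /zsOf nth_rcons ss ltnS kn.
Qed.

Definition A n (H : seq nat -> R) k := \esum_(s in setT)
  ((pc n s * H (nth [::] s 0) * (nth 0%N (nth [::] s n) k)%:R)%:E).

Lemma A_rec n H j : (forall t, 0 <= H t)%R ->
  A n.+1 H j = \esum_(k in setT) (A n H k * mean_matrix p k j).
Proof.
move=> H0; rewrite /A.
rewrite (@esum_sub _ _ setT [set s | valid n.+1 s]) //; last 2 first.
- by move=> s _; rewrite lee_fin !mulr_ge0 ?pc_ge0.
- by move=> s _ /negP nv; rewrite pc_invalid // !mul0r.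
rewrite (reindex_esum [set st : _ * _ | valid n st.1 && canon st.2] [set s | valid n.+1 s]
   (fun st => rcons st.1 st.2)); last first.
  split.
  - move=> [s t] /andP [/andP [/eqP ss cs] ct] /=.
    by rewrite /valid size_rcons ss eqxx all_rcons ct cs.
  - by move=> [s1 t1] [s2 t2] _ _ /= /rcons_inj.
  - move=> s' /=; case/lastP: s' => [|s t] /andP [].
      by rewrite /= eq_sym.
    rewrite size_rcons eqSS all_rcons => ss /andP [ct cs].
    by exists (s, t) => //=; rewrite /valid ss cs ct.
transitivity (\esum_(st in [set st : _ * _ | valid n st.1 && canon st.2])
  ((pc n st.1 * H (nth [::] st.1 0))%:E *
   (offs_conv p (indiv (size (nth [::] st.1 n)) (seqpop (nth [::] st.1 n))) (seqpop st.2)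
     * ((seqpop st.2 j)%:R)%:E))).
  apply: eq_esum => -[s t] /andP [vs ct] /=; have /andP [/eqP ss cs] := vs.
  rewrite nth_rcons ss ltn0Sn nth_rcons ss ltnn eqxx !EFinM -Pcell cell_step // Pcell.
  by rewrite mul4.
rewrite (_ : [set st : _ * _ | valid n st.1 && canon st.2] =
   [set s | valid n s] `*`` (fun=> [set t | canon t])); last first.
  by apply/seteqP; split => -[s t] /=; [move=> /andP[]|move=> [-> ->]].
rewrite -(@esum_esum _ _ _ [set s | valid n s] (fun=> [set t | canon t])
  (fun s t => (pc n s * H (nth [::] s 0))%:E *
   (offs_conv p (indiv (size (nth [::] s n)) (seqpop (nth [::] s n))) (seqpop t)
     * ((seqpop t j)%:R)%:E))); last first.
  by move=> s t _ _; rewrite !mule_ge0 ?conv_ge0 // lee_fin ?mulr_ge0 ?pc_ge0.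
under eq_esum => s _.
  rewrite esumZl ?mulr_ge0 ?pc_ge0 //; last by move=> *; rewrite mule_ge0 ?conv_ge0.
  rewrite (@esum_canon _ (fun w => offs_conv p (indiv (size (nth [::] s n)) (seqpop (nth [::] s n))) w
     * ((w j)%:R)%:E)); last 2 first.
  - by move=> w; rewrite mule_ge0 ?conv_ge0.
  - by move=> w nw; rewrite conv_fin // mul0e.
  rewrite conv_mean // indiv_mean; last by move=> *; exact: Mx_ge0.
  over.
rewrite -(@esum_sub _ _ setT [set s | valid n s]) //; last 2 first.
- by move=> s _; rewrite mule_ge0 ?esum_ge0 // => *; rewrite ?lee_fin ?mulr_ge0 ?pc_ge0 ?mule_ge0 ?Mx_ge0.
- by move=> s _ /negP nv; rewrite pc_invalid // !mul0r mul0e.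
under eq_esum => s _.
  rewrite -esumZl ?mulr_ge0 ?pc_ge0 //; last by move=> *; rewrite mule_ge0 ?Mx_ge0.
  under eq_esum do rewrite muleA -EFinM.
  over.
rewrite esum_swap; last by move=> *; rewrite mule_ge0 ?Mx_ge0 // lee_fin !mulr_ge0 ?pc_ge0.
apply: eq_esum => k _.
rewrite -(fineK (hM k j)) esumZr //; last by move=> *; rewrite lee_fin !mulr_ge0 ?pc_ge0.
by rewrite fine_ge0 ?Mx_ge0.
Qed.

End GWsec.

Local Open Scope ereal_scope.

Lemma esum_le_sub (R : realType) (T : choiceType) (A B : set T) (a : T -> \bar R) :
  B `<=` A -> (forall i, A i -> 0 <= a i) ->
  \esum_(i in B) a i <= \esum_(i in A) a i.
Proof.
move=> BA a0; rewrite [X in _ <= X](esumID B) //.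
rewrite (_ : A `&` B = B); last by apply/seteqP; split => [i []//|i Bi]; split => //; exact: BA.
by rewrite leeDl // esum_ge0 // => i [Ai _]; exact: a0.
Qed.

Lemma esum_le_term' (R : realType) (T : choiceType) (A : set T) (a : T -> \bar R) t :
  A t -> (forall i, A i -> 0 <= a i) -> a t <= \esum_(i in A) a i.
Proof.
move=> At a0; rewrite -esum_set1 ?a0 //; apply: esum_le_sub => //.
by move=> i /= ->.
Qed.

Lemma one_plus_eq (R : realType) (X : \bar R) : 0 <= X -> 1 + X = 1 -> X = 0.
Proof.
case: X => [r| |] //= r0.
  by move=> /eqP; rewrite -EFinD eqe => /eqP h; congr EFin; lra.
Qed.

Lemma unit_fin i : finpop (unitpop i).
Proof. by exists i.+1 => l hl; rewrite /unitpop; case: eqP => // e; move: hl; rewrite e ltnn. Qed.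

Lemma popseq0 : popseq zeropop = [::].
Proof.
rewrite (_ : zeropop = seqpop [::]); first exact: popseqK.
by apply: funext => l; rewrite /seqpop nth_nil.
Qed.

Lemma sum_nonempty (R : realType) (t : seq nat) : canon t -> t <> [::] ->
  1 <= \esum_(k in setT) ((nth 0%N t k)%:R : R)%:E.
Proof.
move=> ct tn; case/lastP: t ct tn => [//|t x] ct _.
apply: (@le_trans _ _ (((nth 0%N (rcons t x) (size t))%:R : R)%:E)); last first.
  by apply: (esum_le_term' (t := size t)) => // *; rewrite lee_fin.
rewrite nth_rcons ltnn eqxx lee_fin.
move: ct; rewrite /canon last_rcons; case: x => //= x _.
by rewrite ler1n.
Qed.

Section GWsec2.
Context (R : realType) (p : nat -> pop -> R).
Hypothesis hp : offspring_law p.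
Hypothesis hM : forall i j, mean_matrix p i j \is a fin_num.
Context d (T : measurableType d) (P : probability T R) (Z : nat -> T -> pop) (alpha : nat -> R).
Hypothesis mZ : forall n l k, measurable [set w | Z n w l = k].
Hypothesis fZ : forall n w, finpop (Z n w).
Hypothesis iZ : forall i, P [set w | Z 0%N w = unitpop i] = (alpha i)%:E.
Hypothesis pa : prob_vector alpha.

Lemma sum_cells n : \esum_(s in setT) P (cell Z n s) = 1.
Proof.
rewrite -(cnt_add P (E := cell Z n)); first by rewrite cell_cov; exact: probability_setT.
- by move=> s; exact: (mcell mZ fZ).
- by move=> *; exact: cell_disj.
Qed.

Lemma cells0 (g : seq (seq nat) -> \bar R) : (forall s, 0 <= g s) ->
  (forall s, ~~ valid 0 s -> g s = 0) ->
  \esum_(s in setT) g s = \esum_(t in [set t | canon t]) g [:: t].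
Proof.
move=> g0 gv; rewrite (@esum_sub _ _ setT [set s | valid 0 s]) //; last first.
  by move=> s _ /negP; exact: gv.
apply: reindex_esum; split.
- by move=> t /= ct; rewrite /valid /= ct.
- by move=> t1 t2 _ _ [].
- move=> s /andP [/eqP]; case: s => [|t [|]] //= _; rewrite andbT => ct.
  by exists t.
Qed.

Lemma P0 t : canon t -> P (cell Z 0 [:: t]) = P [set w | Z 0%N w = seqpop t].
Proof.
move=> ct; rewrite (cell_hist fZ) ?/valid /= ?ct //; congr (P _).
apply/seteqP; split => w /=; first by move/(_ 0%N (leqnn 0)).
by move=> h k; rewrite leqn0 => /eqP ->.
Qed.

Definition U := [set t | exists i, t = popseq (unitpop i)].

Lemma sumU : \esum_(t in U) P (cell Z 0 [:: t]) = 1.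
Proof.
rewrite (_ : U = [set popseq (unitpop i) | i in setT]); last first.
  by apply/seteqP; split => t /= [i]; [move=> ->; exists i|move=> _ <-; exists i].
rewrite esum_image; last by move=> i1 i2 _ _ /popseq_inj; rewrite -/(finpop _) => h;
  have := h (unit_fin _) (unit_fin _); move/(congr1 (fun z => z i1)); rewrite /unitpop eqxx;
  case: eqP.
under eq_esum => i _ do rewrite (P0 (canon_popseq (unit_fin i))) (seqpopK (unit_fin i)) iZ.
by case: pa.
Qed.

Lemma Pnonunit t : canon t -> ~ U t -> P (cell Z 0 [:: t]) = 0.
Proof.
move=> ct nU.
have h := sum_cells 0.
rewrite (cells0 (g := fun s => P (cell Z 0 s))) in h; last 2 first.
- by move=> s; exact: measure_ge0.
- by move=> s nv; rewrite cell_invalid // measure0.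
rewrite (esumID U) in h; last by move=> *; exact: measure_ge0.
rewrite (_ : [set t | canon t] `&` U = U) in h; last first.
  by apply/seteqP; split => [s []//|s Us]; split => //; case: Us => i ->; exact/canon_popseq/unit_fin.
rewrite sumU in h.
have X0 := one_plus_eq (esum_ge0 (fun x _ => measure_ge0 P (cell Z 0 [:: x]))) h.
apply/eqP; rewrite eq_le measure_ge0 andbT -X0.
apply: esum_le_term' => // *; exact: measure_ge0.
Qed.

End GWsec2.

Local Open Scope ereal_scope.

Lemma unit_inj i1 i2 : popseq (unitpop i1) = popseq (unitpop i2) -> i1 = i2.
Proof.
move/(popseq_inj (unit_fin _) (unit_fin _)) => /(congr1 (fun z => z i1)).
by rewrite /unitpop eqxx; case: eqP.
Qed.

Section GWsec3.
Context (R : realType) (p : nat -> pop -> R).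
Context d (T : measurableType d) (P : probability T R) (Z : nat -> T -> pop) (alpha : nat -> R).
Hypothesis mZ : forall n l k, measurable [set w | Z n w l = k].
Hypothesis fZ : forall n w, finpop (Z n w).
Hypothesis iZ : forall i, P [set w | Z 0%N w = unitpop i] = (alpha i)%:E.
Hypothesis pa : prob_vector alpha.

Lemma A0 H k : (forall t, 0 <= H t)%R ->
  A P Z 0 H k = (alpha k * H (popseq (unitpop k)))%:E.
Proof.
move=> H0; rewrite /A.
rewrite (cells0 (g := fun s => (pc P Z 0 s * H (nth [::] s 0) * (nth 0%N (nth [::] s 0) k)%:R)%:E)); last 2 first.
- by move=> s; rewrite lee_fin !mulr_ge0 ?pc_ge0.
- by move=> s nv; rewrite pc_invalid // !mul0r.
rewrite /= (esumID U); last by move=> *; rewrite lee_fin !mulr_ge0 ?pc_ge0.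
rewrite [X in _ + X]esum1 ?adde0; last first.
  move=> t [/= ct nU]; rewrite /pc (Pnonunit mZ fZ iZ pa ct nU) /= !mul0r //.
rewrite (_ : [set t | canon t] `&` U = [set popseq (unitpop i) | i in setT]); last first.
  apply/seteqP; split => t /=; first by move=> [_ [i ->]]; exists i.
  by move=> [i _ <-]; split; [exact/canon_popseq/unit_fin|exists i].
rewrite esum_image; last by move=> i1 i2 _ _ /unit_inj.
rewrite (esum_set1' (t := k)).
- rewrite /pc (P0 P fZ (canon_popseq (unit_fin k))) (seqpopK (unit_fin k)) iZ /=.
  have -> : nth 0%N (popseq (unitpop k)) k = 1%N.
    by have := seqpopK (unit_fin k); move/(congr1 (fun z => z k)); rewrite /seqpop /unitpop eqxx.
  by rewrite mulr1.
- by move=> i; rewrite lee_fin !mulr_ge0 ?pc_ge0.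
- move=> i ik; have -> : nth 0%N (popseq (unitpop i)) k = 0%N.
    have := seqpopK (unit_fin i); move/(congr1 (fun z => z k)); rewrite /seqpop /unitpop.
    by case: eqP => // e; exfalso; apply: ik.
  by rewrite mulr0.
Qed.

Lemma intA n : \int[P]_w popsize R (Z n w) = \esum_(k in setT) A P Z n (fun _ => 1%R) k.
Proof.
have h1 : forall s, measurable (cell Z n s) by move=> s; exact: (mcell mZ fZ).
have h2 : forall s1 s2, s1 <> s2 -> cell Z n s1 `&` cell Z n s2 = set0 by move=> *; exact: cell_disj.
have h3 : forall s w, cell Z n s w -> popsize R (Z n w) = popsize R (seqpop (nth [::] s n)).
  by move=> s w /= <-; rewrite nth_tr // seqpopK.
have h4 : forall s, 0 <= popsize R (seqpop (nth [::] s n)).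
  by move=> s; apply: esum_ge0 => *; rewrite lee_fin.
rewrite (@cnt_int _ _ _ P _ (cell Z n) h1 h2 (cell_cov Z n) _ _ h3 h4).
rewrite /A -esum_swap; last by move=> *; rewrite lee_fin !mulr_ge0 ?pc_ge0.
apply: eq_esum => s _.
rewrite [X in _ * X](_ : _ = (pc P Z n s)%:E); last exact: (Pcell P mZ fZ n s).
rewrite /popsize -esumZr ?pc_ge0 //.
by apply: eq_esum => k _; rewrite -EFinM mulr1 mulrC.
Qed.

Definition Hu u (t : seq nat) : R := (t == popseq (unitpop u))%:R.

Lemma evB m u : P ([set w | Z m w <> zeropop] `&` [set w | Z 0%N w = unitpop u]) <=
   \esum_(k in setT) A P Z m (Hu u) k.
Proof.
set S := [set s : seq (seq nat) | nth [::] s 0 = popseq (unitpop u) /\ nth [::] s m <> [::]].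
have -> : [set w | Z m w <> zeropop] `&` [set w | Z 0%N w = unitpop u] = \bigcup_(s in S) cell Z m s.
  apply/seteqP; split => w /=.
    move=> [nz z0]; exists (tr Z m w) => //; split.
      by rewrite nth_tr // z0.
    rewrite nth_tr // -popseq0 => /(popseq_inj (fZ _ _)) h; apply: nz; apply: h.
    by exists 0%N.
  move=> [s [s0 sm] e]; have {}e : tr Z m w = s := e; subst s; rewrite nth_tr // in s0; rewrite nth_tr // in sm; split.
    by move=> e; apply: sm; rewrite e popseq0.
  exact: (popseq_inj (fZ _ _) (unit_fin _) s0).
have h1 : forall s, measurable (cell Z m s) by move=> s; exact: (mcell mZ fZ).
have h2 : forall s1 s2, s1 <> s2 -> cell Z m s1 `&` cell Z m s2 = set0 by move=> *; exact: cell_disj.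
rewrite (@cnt_add _ _ _ P _ (cell Z m) h1 h2).
rewrite /A -esum_swap; last by move=> *; rewrite lee_fin !mulr_ge0 ?pc_ge0 // /Hu.
apply: (@le_trans _ _ (\esum_(s in S) \esum_(k in setT)
   (pc P Z m s * Hu u (nth [::] s 0) * (nth 0%N (nth [::] s m) k)%:R)%:E)); last first.
  apply: esum_le_sub => // *; apply: esum_ge0 => *; by rewrite lee_fin !mulr_ge0 ?pc_ge0 // /Hu.
apply: le_esum => s [s0 sm].
rewrite /Hu s0 eqxx mulr1.
rewrite [X in X <= _](_ : _ = (pc P Z m s)%:E); last exact: (Pcell P mZ fZ m s).
under eq_esum do rewrite EFinM.
rewrite esumZl ?pc_ge0 //.
case: (boolP (valid m s)) => vs; last by rewrite pc_invalid // mul0e.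
rewrite -[X in X <= _]mule1 lee_wpmul2l ?lee_fin ?pc_ge0 //.
apply: sum_nonempty => //; apply: canon_nth; by case/andP: vs.
Qed.

End GWsec3.

Local Open Scope ereal_scope.

Section cone.
Variable R : realType.
Variables (a : nat -> nat -> \bar R) (M : nat -> nat -> \bar R) (b : nat -> R) (lam c : R).
Hypothesis M0 : forall i j, 0 <= M i j.
Hypothesis b0 : forall k, (0 <= b k)%R.
Hypothesis c0 : (0 <= c)%R.
Hypothesis lam0 : (0 <= lam)%R.
Hypothesis arec : forall n j, a n.+1 j = \esum_(k in setT) (a n k * M k j).

Lemma cone_le : (forall j, a 0 j <= (c * b j)%:E) ->
  (forall j, vecmat b M j <= (lam * b j)%:E) ->
  forall n j, a n j <= (c * lam ^+ n * b j)%:E.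
Proof.
move=> h0 hv; elim=> [|n IH] j; first by rewrite expr0 mulr1.
rewrite arec.
apply: (@le_trans _ _ (\esum_(k in setT) ((c * lam ^+ n)%:E * ((b k)%:E * M k j)))).
  apply: le_esum => k _; rewrite muleA -EFinM.
  by apply: lee_wpmul2r => //; exact: IH.
rewrite esumZl ?mulr_ge0 ?exprn_ge0 //; last by move=> *; rewrite mule_ge0 ?lee_fin.
apply: (@le_trans _ _ ((c * lam ^+ n)%:E * (lam * b j)%:E)).
  by apply: lee_wpmul2l; [rewrite lee_fin mulr_ge0 ?exprn_ge0|exact: hv].
by rewrite -EFinM lee_fin exprS le_eqVlt; apply/orP; left; apply/eqP; ring.
Qed.

Lemma cone_ge : (forall j, (c * b j)%:E <= a 0 j) ->
  (forall j, (lam * b j)%:E <= vecmat b M j) ->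
  forall n j, (c * lam ^+ n * b j)%:E <= a n j.
Proof.
move=> h0 hv; elim=> [|n IH] j; first by rewrite expr0 mulr1.
rewrite arec.
apply: (@le_trans _ _ (\esum_(k in setT) ((c * lam ^+ n)%:E * ((b k)%:E * M k j)))); last first.
  apply: le_esum => k _; rewrite muleA -EFinM.
  by apply: lee_wpmul2r => //; exact: IH.
rewrite esumZl ?mulr_ge0 ?exprn_ge0 //; last by move=> *; rewrite mule_ge0 ?lee_fin.
apply: (@le_trans _ _ ((c * lam ^+ n)%:E * (lam * b j)%:E)); last first.
  by apply: lee_wpmul2l; [rewrite lee_fin mulr_ge0 ?exprn_ge0|exact: hv].
by rewrite -EFinM lee_fin exprS le_eqVlt; apply/orP; left; apply/eqP; ring.
Qed.

End cone.

Lemma sum_scaled (R : realType) (b : nat -> R) (r : R) : prob_vector b -> (0 <= r)%R ->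
  \esum_(j in setT) (r * b j)%:E = r%:E.
Proof.
move=> [b0 b1] r0; under eq_esum do rewrite EFinM.
by rewrite esumZl // ?b1 ?mule1 // => *; rewrite lee_fin.
Qed.

Lemma bernoulli (R : realType) (x : R) n : (0 <= x)%R -> (1 + n%:R * x <= (1 + x) ^+ n)%R.
Proof.
move=> x0; elim: n => [|n IH]; first by rewrite expr0 mul0r addr0.
rewrite exprS -natr1.
have k0 : (0 <= n%:R :> R)%R by rewrite ler0n.
move: IH k0; set y := ((1 + x) ^+ n)%R; set k := (n%:R : R) => IH k0.
rewrite mulrDl mul1r; nra.
Qed.

Local Open Scope ereal_scope.

Lemma geom_sum_fin (R : realType) (c lam : R) : (0 <= c)%R -> (0 <= lam < 1)%R ->
  \sum_(0 <= k <oo) ((c * lam ^+ k)%:E) <= (c / (1 - lam))%:E.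
Proof.
move=> c0 /andP [l0 l1].
apply: lime_le; first by apply: is_cvg_nneseries => k _; rewrite lee_fin mulr_ge0 // exprn_ge0.
apply: nearW => n; rewrite sumEFin lee_fin.
have hl : lam != 1%R by rewrite lt_eqF.
have := geometric_seriesE c hl; move/(congr1 (fun f => f n)) => /= e.
rewrite /series /= in e; rewrite e.
have h1 : (0 < 1 - lam)%R by rewrite subr_gt0.
rewrite ler_pdivlMr // divfK ?gt_eqF //.
have : (0 <= lam ^+ n)%R by rewrite exprn_ge0.
nra.
Qed.

Section ext.
Context (R : realType) (p : nat -> pop -> R).
Hypothesis hp : offspring_law p.
Hypothesis hM : forall i j, mean_matrix p i j \is a fin_num.
Context (alpha1 : nat -> R) (lambda1 : R).
Hypothesis pa1 : prob_vector alpha1.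
Hypothesis a1pos : forall i, (0 < alpha1 i)%R.
Hypothesis l0 : (0 <= lambda1)%R.
Hypothesis l1 : (lambda1 < 1)%R.
Hypothesis hv1 : forall j, vecmat alpha1 (mean_matrix p) j <= (lambda1 * alpha1 j)%:E.
Context d (T : measurableType d) (P : probability T R) (Z : nat -> T -> pop) (alpha : nat -> R).
Hypothesis GW : GW_process P Z p alpha.
Hypothesis pa : prob_vector alpha.

Lemma mEq (mZ : forall n l k, measurable [set w | Z n w l = k]) m z :
  measurable [set w | Z m w = z].
Proof.
rewrite (_ : [set w | Z m w = z] = \bigcap_l [set w | Z m w l = z l]).
  by apply: bigcapT_measurable => l; exact: mZ.
apply/seteqP; split => w /=; first by move=> e l _ /=; rewrite e.
by move=> h; apply: funext => l; exact: h.
Qed.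

Lemma Fu_bound u N : P (~` extinct Z `&` [set w | Z 0%N w = unitpop u]) <=
  \sum_(N <= m <oo) ((alpha u / alpha1 u * lambda1 ^+ m)%:E).
Proof.
case: GW => mZ fZ iZ stZ.
set c := (alpha u / alpha1 u)%R.
have c0 : (0 <= c)%R by rewrite divr_ge0 ?(ltW (a1pos u)) //; case: pa.
set F := fun m => [set w | Z m w <> zeropop] `&` [set w | Z 0%N w = unitpop u].
have hF : forall m, measurable (F m).
  move=> m; apply: measurableI; last exact: mEq.
  by rewrite (_ : [set w | _] = ~` [set w | Z m w = zeropop]) //; apply: measurableC; exact: mEq.
have hA : measurable (~` extinct Z `&` [set w | Z 0%N w = unitpop u]).
  apply: measurableI; last exact: mEq.
  apply: measurableC.
  rewrite (_ : extinct Z = \bigcup_n \bigcap_m [set w | (n <= m)%N -> Z m w = zeropop]).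
    apply: bigcupT_measurable => n; apply: bigcapT_measurable => m.
    case: (leqP n m) => nm.
      by rewrite (_ : [set w | _] = [set w | Z m w = zeropop]); [exact: mEq|apply/seteqP; split => w /=; auto].
    by rewrite (_ : [set w | _] = setT) //; apply/seteqP; split => w //= _; rewrite leqNgt nm.
  apply/seteqP; split => w /=.
    by move=> [n h]; exists n => // m _; exact: h.
  by move=> [n _ h]; exists n => m nm; exact: (h m Logic.I nm).
have hsub : ~` extinct Z `&` [set w | Z 0%N w = unitpop u] `<=` \bigcup_(n in ~` `I_N) F n.
  move=> w [/= ne Au].
  have : ~ (forall m, (N <= m)%N -> Z m w = zeropop) by move=> h; apply: ne; exists N.
  move=> /existsNP [m /not_implyP [Nm nz]]; exists m; last by split.
  by rewrite /= ltnNge Nm.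
apply: le_trans (measure_sigma_subadditive_tail P hF hA hsub) _.
apply: lee_nneseries => [m _ _|m _]; first exact: measure_ge0.
apply: le_trans (evB P mZ fZ m u) _.
have arec n j : A P Z n.+1 (Hu R u) j = \esum_(k in setT) (A P Z n (Hu R u) k * mean_matrix p k j).
  by apply: (A_rec hp hM mZ fZ stZ) => t; rewrite /Hu ler0n.
have Mx0 i j : 0 <= mean_matrix p i j by apply: esum_ge0 => v _; rewrite lee_fin mulr_ge0 ?p_ge0.
have hb := @cone_le R (fun n k => A P Z n (Hu R u) k) _ alpha1 lambda1 c Mx0 (fun k => ltW (a1pos k)) c0 l0 arec.
have h0 : forall j, A P Z 0 (Hu R u) j <= (c * alpha1 j)%:E.
  move=> j; rewrite (A0 mZ fZ iZ pa); last by move=> t; rewrite /Hu ler0n.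
  rewrite lee_fin /Hu; case: eqP => [/unit_inj ->|_].
    by rewrite mulr1 /c divfK // gt_eqF.
  by rewrite mulr0 mulr_ge0 // ltW.
apply: le_trans (le_esum (fun k _ => hb h0 hv1 m k)) _.
by rewrite (sum_scaled pa1) // mulr_ge0 // exprn_ge0.
Qed.

Lemma Fu0 u : P (~` extinct Z `&` [set w | Z 0%N w = unitpop u]) = 0.
Proof.
set c := (alpha u / alpha1 u)%R.
have c0 : (0 <= c)%R by rewrite divr_ge0 ?(ltW (a1pos u)) //; case: pa.
have tail : \sum_(N <= k <oo) ((c * lambda1 ^+ k)%:E) @[N --> \oo] --> 0.
  apply: nneseries_tail_cvg; last by move=> k _; rewrite lee_fin mulr_ge0 ?exprn_ge0.
  apply: le_lt_trans (geom_sum_fin c0 _) _; first by rewrite l0 l1.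
  exact: ltry.
apply/eqP; rewrite eq_le measure_ge0 andbT.
rewrite -(cvg_lim _ tail) //.
apply: lime_ge; first by apply/cvg_ex; exists 0; exact: tail.
by apply: nearW => N; exact: Fu_bound.
Qed.

End ext.

Local Open Scope ereal_scope.

Lemma mext d (T : measurableType d) (Z : nat -> T -> pop) :
  (forall n l k, measurable [set w | Z n w l = k]) -> measurable (extinct Z).
Proof.
move=> mZ.
rewrite (_ : extinct Z = \bigcup_n \bigcap_m [set w | (n <= m)%N -> Z m w = zeropop]).
  apply: bigcupT_measurable => n; apply: bigcapT_measurable => m.
  case: (leqP n m) => nm.
    by rewrite (_ : [set w | _] = [set w | Z m w = zeropop]); [exact: mEq|apply/seteqP; split => w /=; auto].
  by rewrite (_ : [set w | _] = setT) //; apply/seteqP; split => w //= _; rewrite leqNgt nm.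
apply/seteqP; split => w /=.
  by move=> [n h]; exists n => // m _; exact: h.
by move=> [n _ h]; exists n => m nm; exact: (h m Logic.I nm).
Qed.

Section ext2.
Context (R : realType) (p : nat -> pop -> R).
Hypothesis hp : offspring_law p.
Hypothesis hM : forall i j, mean_matrix p i j \is a fin_num.
Context (alpha1 : nat -> R) (lambda1 : R).
Hypothesis pa1 : prob_vector alpha1.
Hypothesis a1pos : forall i, (0 < alpha1 i)%R.
Hypothesis l0 : (0 <= lambda1)%R.
Hypothesis l1 : (lambda1 < 1)%R.
Hypothesis hv1 : forall j, vecmat alpha1 (mean_matrix p) j <= (lambda1 * alpha1 j)%:E.
Context d (T : measurableType d) (P : probability T R) (Z : nat -> T -> pop) (alpha : nat -> R).
Hypothesis GW : GW_process P Z p alpha.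
Hypothesis pa : prob_vector alpha.

Lemma ext_one : P (extinct Z) = 1.
Proof.
have GW' := GW; case: GW' => mZ fZ iZ stZ.
set Au := fun u => [set w | Z 0%N w = unitpop u].
have mA u : measurable (Au u) by exact: mEq.
have dA u v : u <> v -> Au u `&` Au v = set0.
  move=> uv; apply/seteqP; split => w // [/= e1 e2]; apply: uv.
  have := congr1 (fun z => z u) (etrans (esym e1) e2); rewrite /unitpop eqxx.
  by case: eqP.
have UA : P (\bigcup_(u in setT) Au u) = 1.
  rewrite (cnt_add P mA dA).
  apply: (@eq_trans _ _ (\esum_(u in setT) (alpha u)%:E)); last by case: pa.
  by apply: eq_esum => u _; exact: iZ.
have N0 : P (~` \bigcup_(u in setT) Au u) = 0.
  rewrite probability_setC ?UA ?subee //.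
  by apply: bigcup_measurable => *; exact: mA.
set F := fun u => ~` extinct Z `&` Au u.
have mF u : measurable (F u) by apply: measurableI => //; apply: measurableC; exact: mext.
have dF u v : u <> v -> F u `&` F v = set0.
  move=> uv; apply/seteqP; split => w // [[_ e1] [_ e2]]; have := dA u v uv.
  by rewrite -subset0 => /(_ w); apply.
have FU : P (\bigcup_(u in setT) F u) = 0.
  rewrite (cnt_add P mF dF); apply: esum1 => u _.
  exact: (Fu0 hp hM pa1 a1pos l0 l1 hv1 GW pa u).
have mU1 : measurable (\bigcup_(u in setT) F u) by apply: bigcup_measurable => *; exact: mF.
have mU2 : measurable (~` \bigcup_(u in setT) Au u).
  by apply: measurableC; apply: bigcup_measurable => *; exact: mA.
have sub : ~` extinct Z `<=` (\bigcup_(u in setT) F u) `|` (~` \bigcup_(u in setT) Au u).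
  move=> w ne; case: (pselect ((\bigcup_(u in setT) Au u) w)) => [[u _ Auw]|nA].
    by left; exists u.
  by right.
have le0 : P (~` extinct Z) <= 0.
  apply: le_trans (le_measure _ _ _ sub) _.
  - by rewrite inE; apply: measurableC; exact: mext.
  - by rewrite inE; apply: measurableU.
  apply: le_trans (measureU2 _ mU1 mU2) _.
  rewrite [X in X + _ <= _](_ : _ = 0); last exact: FU.
  by rewrite [X in _ + X <= _](_ : _ = 0) ?adde0 //; exact: N0.
have e0 : P (~` extinct Z) = 0 by apply/eqP; rewrite eq_le le0 measure_ge0.
move: e0; rewrite probability_setC; last exact: mext.
have fe : P (extinct Z) \is a fin_num by rewrite fin_num_measure //; exact: mext.
rewrite -(fineK fe) -EFinB => /eqP; rewrite eqe subr_eq0 => /eqP <-.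
by [].
Qed.

End ext2.

End Helpers.
Import Helpers.


Theorem mainTheorem9 (R : realType) (p : nat -> pop -> R)
  (alpha1 alpha2 : nat -> R) (lambda1 lambda2 : R) :
  offspring_law p ->
  (forall i j, mean_matrix p i j \is a fin_num) ->
  irreducible (mean_matrix p) ->
  (* dichotomy property, for every initial type i *)
  (forall (i : nat) (d : measure_display) (T : measurableType d)
          (P : probability T R) (Z : nat -> T -> pop),
      GW_process P Z p (delta R i) ->
      P (extinct Z `|` explodes R Z) = 1%E) ->
  prob_vector alpha1 -> (forall i, 0 < alpha1 i) -> lambda1 < 1 ->
  (forall j, (vecmat alpha1 (mean_matrix p) j <= (lambda1 * alpha1 j)%:E)%E) ->
  prob_vector alpha2 -> 1 < lambda2 ->
  (forall j, ((lambda2 * alpha2 j)%:E <= vecmat alpha2 (mean_matrix p) j)%E) ->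
  (* q = 1 *)
  (forall (i : nat) (d : measure_display) (T : measurableType d)
          (P : probability T R) (Z : nat -> T -> pop),
      GW_process P Z p (delta R i) -> P (extinct Z) = 1%E) /\
  (* start distributed as alpha1 *)
  (forall (d : measure_display) (T : measurableType d)
          (P : probability T R) (Z : nat -> T -> pop),
      GW_process P Z p alpha1 ->
      (forall n, ((\int[P]_w popsize R (Z n w))%E <= (lambda1 ^+ n)%:E)%E) /\
      ((fun n => (\int[P]_w popsize R (Z n w))%E) @ \oo --> (0:R)%:E)) /\
  (* start distributed as alpha2 *)
  (forall (d : measure_display) (T : measurableType d)
          (P : probability T R) (Z : nat -> T -> pop),
      GW_process P Z p alpha2 ->
      ((fun n => (\int[P]_w popsize R (Z n w))%E) @ \oo --> +oo%E) /\
      P (extinct Z) = 1%E).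
Proof.
move=> hp hM irr dich pa1 a1pos l1 hv1 pa2 l2 hv2.
have Mx0 i j : (0 <= mean_matrix p i j)%E.
  by apply: esum_ge0 => v _; rewrite lee_fin mulr_ge0 ?p_ge0.
have l0 : 0 <= lambda1.
  have := hv1 0%N; have : (0 <= vecmat alpha1 (mean_matrix p) 0)%E.
    by apply: esum_ge0 => i _; rewrite mule_ge0 // lee_fin; case: pa1.
  move=> h1 h2; have := le_trans h1 h2; rewrite lee_fin => h3.
  have := a1pos 0%N; nra.
have b1 k : 0 <= alpha1 k by case: pa1.
have b2 k : 0 <= alpha2 k by case: pa2.
have popsize0 (z : pop) : (0 <= popsize R z)%E by apply: esum_ge0 => *; rewrite lee_fin.
split; [|split].
- move=> i d T P Z GW; apply: (ext_one hp hM pa1 a1pos l0 l1 hv1 GW).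
  split; first by move=> j; rewrite /delta ler0n.
  rewrite (esum_set1' (t := i)); first by rewrite /delta eqxx.
  + by move=> j; rewrite lee_fin /delta ler0n.
  + by move=> j ji; rewrite /delta; case: eqP.
- move=> d T P Z GW; have GW' := GW; case: GW' => mZ fZ iZ stZ.
  have arec n j := A_rec hp hM mZ fZ stZ n (H := fun=> 1%R) j (fun _ => ler01).
  have h0 j : (A P Z 0 (fun=> 1%R) j <= (1 * alpha1 j)%:E)%E.
    by rewrite (A0 mZ fZ iZ pa1) // mulr1 mul1r.
  have hb := cone_le Mx0 b1 ler01 l0 arec h0 hv1.
  have bound n : ((\int[P]_w popsize R (Z n w)) <= (lambda1 ^+ n)%:E)%E.
    rewrite intA //; apply: le_trans (le_esum (fun k _ => hb n k)) _.
    rewrite sum_scaled; [by rewrite lee_fin; lra|by []|by rewrite mulr_ge0 ?exprn_ge0].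
  split => //.
  apply: (@squeeze_cvge _ _ _ _ (cst 0%E) _ (fun n => (lambda1 ^+ n)%:E)).
  + apply: nearW => n; rewrite bound andbT; exact: integral_ge0.
  + exact: cvg_cst.
  + apply: cvg_EFin; first exact: nearW.
    by apply: cvg_expr; rewrite ger0_norm.
- move=> d T P Z GW; have GW' := GW; case: GW' => mZ fZ iZ stZ.
  split; last exact: (ext_one hp hM pa1 a1pos l0 l1 hv1 GW pa2).
  have arec n j := A_rec hp hM mZ fZ stZ n (H := fun=> 1%R) j (fun _ => ler01).
  have h0 j : ((1 * alpha2 j)%:E <= A P Z 0 (fun=> 1%R) j)%E.
    by rewrite (A0 mZ fZ iZ pa2) // mulr1 mul1r.
  have l20 : 0 <= lambda2 by apply: le_trans (ltW l2).
  have hb := cone_ge Mx0 b2 ler01 l20 arec h0 hv2.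
  have bound n : ((lambda2 ^+ n)%:E <= (\int[P]_w popsize R (Z n w)))%E.
    rewrite intA //; apply: le_trans _ (le_esum (fun k _ => hb n k)).
    rewrite sum_scaled; [by rewrite lee_fin; lra|by []|by rewrite mulr_ge0 ?exprn_ge0].
  apply/cvgeyPge => K.
  have hx : 0 <= `|K| / (lambda2 - 1) by rewrite divr_ge0 // subr_ge0 ltW.
  exists (Num.Def.archi_bound (`|K| / (lambda2 - 1))) => // n /= Nn.
  apply: le_trans (bound n); rewrite lee_fin.
  have := archi_boundP hx; set N := Num.Def.archi_bound _ => hN.
  have hNn : (N%:R <= n%:R :> R) by rewrite ler_nat.
  have hb2 : 1 + n%:R * (lambda2 - 1) <= lambda2 ^+ n.
    have := @bernoulli R (lambda2 - 1) n.
    rewrite (_ : 1 + (lambda2 - 1) = lambda2); last by ring.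
    by apply; rewrite subr_ge0 ltW.
  have hl : 0 < lambda2 - 1 by rewrite subr_gt0.
  rewrite ltr_pdivrMr // in hN.
  have := ler_norm K.
  nra.
Qed.
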